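(* For the erased fair coin flips source with erasure probability $\delta$ and any $(d_s,d_x)\in\mathcal D_2\cup\mathcal D_3$, for every blocklength $k$ and positive integer $M$ there exists a $(k,M,d_s,d_x,\epsilon)$ code such that \[\epsilon\le\sum_{t=0}^k\mathsf{binopmf}(t;k,\delta)\sum_{i=0}^t\mathsf{binopmf}(i;t,1/2)\Big(1-\mathsf{binocdf}\big(\min\{\lfloor kd_s\rfloor-i,\ \lfloor kd_x\rfloor-t\};k-t,1/2\big)\Big)^M.\]
   Context: Erased fair coin flips (EFCF): $S$ uniform on $\{0,1\}$; $X\in\{0,1,e\}$ equals $S$ with probability $1-\delta$ and $e$ with probability $\delta$; blocks $(S^k,X^k)$ have i.i.d. components. Reconstructions $z^k\in\{0,1\}^k$, $y^k\in\{0,1,e\}^k$ with normalized Hamming distortions $\mathsf d_s(s^k,z^k)=\frac1k\sum_i1\{s_i\ne z_i\}$, $\mathsf d_x(x^k,y^k)=\frac1k\sum_i1\{x_i\ne y_i\}$. A $(k,M,d_s,d_x,\epsilon)$ code is a random encoder $P_{U|X^k}$ into $\{1,\dots,M\}$ and a random decoder $P_{Z^kY^k|U}$ with $\mathbb P[\mathsf d_s(S^k,Z^k)>d_s\text{ or }\mathsf d_x(X^k,Y^k)>d_x]\le\epsilon$. Regions: $\mathcal D_2=\{2\delta\le d_x\le1/2+\delta/2,\ d_s\ge d_x-\delta/2\}$, $\mathcal D_3=\{d_x\ge d_s+\delta/2,\ \delta/2\le d_s\le1/2\}$. $\mathsf{binopmf}(\cdot;n,p)$ and $\mathsf{binocdf}(\cdot;n,p)$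 are the pmf and cdf of the Binomial$(n,p)$ distribution (cdf zero at negative arguments). *)

(* Defs.v *)
From HB Require Import structures.
From mathcomp Require Import all_boot all_order all_algebra.
Set Implicit Arguments. Unset Strict Implicit. Unset Printing Implicit Defensive.
Import Order.TTheory GRing.Theory Num.Theory.
Local Open Scope ring_scope.

Section EFCF.
Variable R : archiRealFieldType.

(* Erasure alphabet {0,1,e}: Some b = bit b, None = erasure e. *)
Definition xsym := option bool.

Definition binopmf (t n : nat) (p : R) : R := 'C(n, t)%:R * p ^+ t * (1 - p) ^+ (n - t).
Definition binocdf (m : int) (n : nat) (p : R) : R :=
  if m < 0 then 0 else \sum_(j < (`|m|%N).+1) binopmf j n p.

Variable k : nat.

(* Single-letter joint pmf of (S,X): S uniform, X = S w.p. 1-delta, e w.p. delta. *)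
Definition efcf_pmf1 (delta : R) (s : bool) (x : xsym) : R :=
  (1 / 2) * (match x with Some b => if b == s then 1 - delta else 0 | None => delta end).

Definition efcf_pmf (delta : R) (s : {ffun 'I_k -> bool}) (x : {ffun 'I_k -> xsym}) : R :=
  \prod_(i < k) efcf_pmf1 delta (s i) (x i).

Definition dist_s (s z : {ffun 'I_k -> bool}) : R := #|[set i | s i != z i]|%:R / k%:R.
Definition dist_x (x y : {ffun 'I_k -> xsym}) : R := #|[set i | x i != y i]|%:R / k%:R.

Variable M : nat.

(* Random encoder P_{U|X^k} into 'I_M (= {1,...,M}) : a stochastic kernel. *)
Definition is_encoder (enc : {ffun 'I_k -> xsym} -> 'I_M -> R) :=
  forall x, (forall u, 0 <= enc x u) /\ \sum_(u < M) enc x u = 1.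

Definition is_decoder
  (dec : 'I_M -> {ffun 'I_k -> bool} * {ffun 'I_k -> xsym} -> R) :=
  forall u, (forall zy, 0 <= dec u zy) /\ \sum_(zy : {ffun 'I_k -> bool} * {ffun 'I_k -> xsym}) dec u zy = 1.

Definition excess_prob (delta ds dx : R)
  (enc : {ffun 'I_k -> xsym} -> 'I_M -> R)
  (dec : 'I_M -> {ffun 'I_k -> bool} * {ffun 'I_k -> xsym} -> R) : R :=
  \sum_(s : {ffun 'I_k -> bool}) \sum_(x : {ffun 'I_k -> xsym}) \sum_(u < M)
   \sum_(zy : {ffun 'I_k -> bool} * {ffun 'I_k -> xsym})
     efcf_pmf delta s x * enc x u * dec u zy *
     (if (ds < dist_s s zy.1) || (dx < dist_x x zy.2) then 1 else 0).

Definition is_code (delta ds dx eps : R) :=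
  exists enc dec, [/\ is_encoder enc, is_decoder dec & excess_prob delta ds dx enc dec <= eps].

End EFCF.

Definition region_D2 (R : archiRealFieldType) (delta ds dx : R) : Prop :=
  [/\ 2 * delta <= dx, dx <= 1 / 2 + delta / 2 & dx - delta / 2 <= ds].
Definition region_D3 (R : archiRealFieldType) (delta ds dx : R) : Prop :=
  [/\ ds + delta / 2 <= dx, delta / 2 <= ds & ds <= 1 / 2].

(* Main.v *)
Require Import Defs.
From HB Require Import structures.
From mathcomp Require Import all_boot all_order all_algebra zify ring lra.
Import Order.TTheory GRing.Theory Num.Theory.
Local Open Scope ring_scope.
Set Implicit Arguments. Unset Strict Implicit. Unset Printing Implicit Defensive.

Section Gen.
Variable R : archiRealFieldType.

Lemma sum_by_val (I : finType) (P : pred I) (g : I -> nat) n (F : nat -> R) :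
  (forall i, P i -> (g i < n)%N) ->
  \sum_(i | P i) F (g i) = \sum_(j < n) #|[set i | P i & g i == j]|%:R * F j.
Proof.
move=> lt.
transitivity (\sum_(i | P i) \sum_(j < n) ((g i == j)%:R * F j)).
  apply: eq_bigr => i Pi; rewrite (bigD1 (Ordinal (lt i Pi))) //= eqxx mul1r.
  rewrite big1 ?addr0 // => j ne.
  have -> : (g i == j) = false.
    apply/negbTE; apply: contra ne => /eqP h; apply/eqP/val_inj; by rewrite /= h.
  by rewrite mul0r.
rewrite exchange_big; apply: eq_bigr => j _; rewrite -big_distrl /=; congr (_ * _).
rewrite -natr_sum; congr _%:R.
rewrite -sum1_card big_mkcond /= [in RHS]big_mkcond /=.
by apply: eq_bigr => i _; rewrite inE; case: (P i); case: eqP.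
Qed.

Lemma sum_binom (n : nat) : \sum_(i < n.+1) ('C(n, i))%:R = (2 ^ n)%:R :> R.
Proof.
have := exprDn (1 : R) 1 n; rewrite (_ : (1 : R) + 1 = 2%:R) // => h.
rewrite natrX h; apply: eq_bigr => i _; by rewrite !expr1n mul1r.
Qed.

Lemma tele_int (f : int -> R) (L : int) n :
  (forall z, z <= 0 -> f z = f 0) ->
  \sum_(j < n) (if L < j%:Z then f j%:Z - f (j%:Z + 1) else 0)
  = if L < n%:Z then f (L + 1) - f n%:Z else 0.
Proof.
move=> f0; elim: n => [|n IH].
  rewrite big_ord0; case: ifP => // h; rewrite f0; last by lia.
  by rewrite subrr.
rewrite big_ord_recr /= IH.
have [h1|h1] := ltP L n%:Z.
  have -> : L < n.+1%:Z by lia.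
  rewrite (_ : n.+1%:Z = n%:Z + 1); last by lia.
  by rewrite addrA subrK.
have [h2|h2] := ltP L n.+1%:Z.
  have -> : L = n%:Z by lia.
  by rewrite addr0 (_ : n.+1%:Z = n%:Z + 1) ?subrr //; lia.
by rewrite addr0.
Qed.

Lemma prod_split_ord M (u : 'I_M) (a b : R) :
  \prod_(v < M | v != u) (if (v < u)%N then a else b) = a ^+ u * b ^+ (M.-1 - u).
Proof.
rewrite big_mkcond /=.
rewrite (eq_bigr (fun v : 'I_M => (fun w : nat => if w == u then 1 else if (w < u)%N then a else b) v)); last first.
  by move=> v _; rewrite -val_eqE /=; case: eqP.
rewrite -(big_mkord xpredT (fun w : nat => if w == u then 1 else if (w < u)%N then a else b)).
have uM := ltn_ord u.
rewrite (@big_cat_nat _ _ _ u 0 M) ?(ltnW uM) //= [X in _ * X]big_ltn // eqxx mul1r.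
rewrite (eq_big_nat _ _ (F2 := fun _ => a)); last first.
  by move=> i /andP[_ h]; rewrite ltn_eqF // h.
rewrite (eq_big_nat _ _ (F2 := fun _ => b) (m := u.+1)); last first.
  by move=> i /andP[h _]; rewrite gtn_eqF // ltnNge ltnW.
rewrite !prodr_const_nat subn0; congr (_ * _ ^+ _); lia.
Qed.

End Gen.


Section Argmin.
Variable R : archiRealFieldType.
Variables (T : finType) (M : nat) (hM : (0 < M)%N) (J : T -> nat) (n : nat).
Hypothesis Jn : forall c, (J c < n)%N.

Definition keyC (C : {ffun 'I_M -> T}) (u : 'I_M) : nat := (J (C u) * M + u)%N.
Definition um C := [arg min_(u < Ordinal hM) keyC C u].

Lemma key_inj C u v : keyC C u = keyC C v -> u = v.
Proof.
move=> /(congr1 (modn^~ M)); rewrite /keyC !modnMDl !modn_small //.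
by move=> /val_inj.
Qed.

Lemma um_spec C u : (um C == u) = [forall v, (v != u) ==> (keyC C u < keyC C v)%N].
Proof.
rewrite /um; case: arg_minnP => // w _ hw.
apply/eqP/forallP.
  move=> <- v; apply/implyP => nv; rewrite ltn_neqAle hw // andbT.
  by apply/eqP => /key_inj h; rewrite h eqxx in nv.
move=> h; apply/eqP; apply: contraT => nw.
have := implyP (h w) nw; have := hw u isT; lia.
Qed.

Lemma cmp_key C u v : v != u ->
  (keyC C u < keyC C v)%N = (if (v < u)%N then J (C u) < J (C v) else J (C u) <= J (C v))%N.
Proof.
move=> nv; rewrite /keyC; have := ltn_ord u; have := ltn_ord v.
have nv' : (v : nat) <> u by move=> h; move: nv; rewrite -val_eqE /= h eqxx.
set b := J (C u); set g := J (C v).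
move=> vM uM.
have [lt|ge] := ltnP b g.
  have : (b * M + M <= g * M)%N by rewrite -mulSnr leq_mul2r lt orbT.
  by case: ifP => _ h; apply/idP/idP; lia.
have [eq|gt] := eqVneq b g.
  by rewrite eq; case: ifP => hvu; apply/idP/idP; lia.
have lt : (g < b)%N by rewrite ltn_neqAle eq_sym gt ge.
have : (g * M + M <= b * M)%N by rewrite -mulSnr leq_mul2r lt orbT.
by case: ifP => _ h; apply/idP/idP; lia.
Qed.

Definition GG (b : nat) : R := \sum_c ((b < J c)%N)%:R.
Definition HH (b : nat) : R := \sum_c ((b <= J c)%N)%:R.

Lemma argmin_sum (phi : T -> R) :
 \sum_(C : {ffun 'I_M -> T}) phi (C (um C)) =
 \sum_(b < n) (\sum_c (J c == b)%:R * phi c) *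
     \sum_(u < M) (GG b ^+ u * HH b ^+ (M.-1 - u)).
Proof.
pose h (u : 'I_M) (b : nat) (v : 'I_M) (c : T) : R :=
  if v == u then (J c == b)%:R * phi c
  else if (v < u)%N then ((b < J c)%N)%:R else ((b <= J c)%N)%:R.
transitivity (\sum_(C : {ffun 'I_M -> T}) \sum_(u < M) \sum_(b < n) \prod_(v < M) h u b v (C v)).
  apply: eq_bigr => C _.
  rewrite (bigD1 (um C)) //= [X in _ = _ + X]big1 ?addr0; last first.
    move=> u nu; apply: big1 => b _; rewrite (bigD1 u) //= /h eqxx.
    rewrite [\prod_(v | v != u) _](_ : _ = \prod_(v | v != u)
      (if (v < u)%N then ((b < J (C v))%N)%:R else ((b <= J (C v))%N)%:R)); last first.
      by apply: eq_bigr => v nv; rewrite (negbTE nv).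
    have [eb|nb] := eqVneq (J (C u)) b; last by rewrite mul0r mul0r.
    have : ~~ [forall v, (v != u) ==> (keyC C u < keyC C v)%N] by rewrite -um_spec eq_sym.
    move=> /forallPn [v]; rewrite negb_imply => /andP[nv nk].
    rewrite (bigD1 v) //= -eb; have := cmp_key C nv; rewrite (negbTE nk).
    by case: ifP => _ <-; rewrite mul0r mulr0.
  set u := um C.
  rewrite (bigD1 (Ordinal (Jn (C u)))) //= [X in _ = _ + X]big1 ?addr0; last first.
    move=> b nb; rewrite (bigD1 u) //= /h eqxx.
    have -> : (J (C u) == b) = false.
      apply/negbTE; apply: contra nb => /eqP e; apply/eqP/val_inj; by rewrite /= e.
    by rewrite !mul0r.
  rewrite (bigD1 u) //= /h !eqxx mul1r.
  have : (um C == u) by [].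
  rewrite um_spec => /forallP H.
  rewrite big1 ?mulr1 // => v nv; rewrite (negbTE nv).
  have := implyP (H v) nv; rewrite cmp_key //; by case: ifP => _ ->.
rewrite exchange_big /=.
under eq_bigr => u _ do rewrite exchange_big /=.
under eq_bigr => u _ do under eq_bigr => b _ do rewrite -bigA_distr_bigA /=.
under [RHS]eq_bigr => b _ do rewrite big_distrr /=.
rewrite [RHS]exchange_big /=; apply: eq_bigr => u _; apply: eq_bigr => b _.
rewrite (bigD1 u) //= {1}/h eqxx; congr (_ * _).
rewrite -prod_split_ord; apply: eq_bigr => v nv.
rewrite /h (negbTE nv) /GG /HH; by case: ifP.
Qed.

End Argmin.


Section Counting.
Variable R : archiRealFieldType.
Variables (k : nat) (s : {ffun 'I_k -> bool}) (E : {set 'I_k}).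

Definition Dset (c : {ffun 'I_k -> bool}) := [set i | s i != c i].
Definition aa c := #|Dset c :&: E|.
Definition bb c := #|Dset c :\: E|.

Lemma cardCE : #|~: E| = (k - #|E|)%N.
Proof. have := cardsC E; rewrite card_ord => h; lia. Qed.

Lemma JC (F : nat -> nat -> R) :
  \sum_c F (aa c) (bb c) =
  \sum_(a < #|E|.+1) \sum_(g < (k - #|E|).+1) ('C(#|E|, a) * 'C(k - #|E|, g))%:R * F a g.
Proof.
transitivity (\sum_(D : {set 'I_k}) F #|D :&: E| #|D :\: E|).
  rewrite (reindex (fun D : {set 'I_k} => [ffun i => (i \in D) (+) s i])) /=; last first.
    exists Dset => [D _ | c _].
      by apply/setP => i; rewrite inE ffunE; case: (i \in D); case: (s i).
    by apply/ffunP => i; rewrite ffunE inE; case: (c i); case: (s i).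
  apply: eq_bigr => D _; rewrite /aa /bb.
  have -> : Dset [ffun i => (i \in D) (+) s i] = D.
    by apply/setP => i; rewrite inE ffunE; case: (i \in D); case: (s i).
  by [].
transitivity (\sum_(A : {set 'I_k} | A \subset E) \sum_(B : {set 'I_k} | B \subset ~: E) F #|A| #|B|).
  rewrite pair_big_dep /=.
  rewrite (reindex (fun D : {set 'I_k} => (D :&: E, D :\: E))) /=; last first.
    exists (fun p => p.1 :|: p.2) => [D _ | [A B]]; first by rewrite /= setID.
    rewrite inE /= => /andP[sA sB].
    congr (_, _); apply/setP => i; rewrite !inE;
      move: (subsetP sA i) (subsetP sB i); rewrite !inE;
      case: (i \in A); case: (i \in B); case: (i \in E) => //= h1 h2;
      first [by have := h1 isT | by have := h2 isT].
  rewrite [RHS](eq_bigl xpredT) // => D; by rewrite subsetIr /= setDE subsetIr.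
transitivity (\sum_(A : {set 'I_k} | A \subset E)
   \sum_(g < (k - #|E|).+1) 'C(k - #|E|, g)%:R * F #|A| g).
  apply: eq_bigr => A _.
  rewrite (@sum_by_val _ _ (fun B : {set 'I_k} => B \subset ~: E) (fun B => #|B|) (k - #|E|).+1 (F #|A|)); last first.
    by move=> B sB; rewrite ltnS -cardCE subset_leq_card.
  apply: eq_bigr => g _; by rewrite cards_draws cardCE.
rewrite (@sum_by_val _ _ (fun A : {set 'I_k} => A \subset E) (fun A => #|A|) #|E|.+1
   (fun a => \sum_(g < (k - #|E|).+1) 'C(k - #|E|, g)%:R * F a g)); last first.
  by move=> A sA; rewrite ltnS subset_leq_card.
apply: eq_bigr => a _; rewrite cards_draws big_distrr /=; apply: eq_bigr => g _.
by rewrite natrM mulrA.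
Qed.

End Counting.


Section Bin.
Variable R : archiRealFieldType.

Lemma half_sub : 1 - 1 / 2 = 1 / 2 :> R.
Proof. lra. Qed.

Lemma binopmf_half j n : binopmf j n (1 / 2 : R) = 'C(n, j)%:R / (2 ^ n)%:R.
Proof.
rewrite /binopmf half_sub; have [h|h] := leqP j n.
  rewrite -mulrA -exprD subnKC // expr_div_n expr1n natrX; by rewrite mul1r.
by rewrite bin_small // !mul0r.
Qed.

Lemma sum_trunc (f : nat -> R) n N : (forall j, (n < j)%N -> f j = 0) ->
  \sum_(j < N) f j = \sum_(j < n.+1) ((j < N)%N)%:R * f j.
Proof.
move=> f0; set Q := maxn N n.+1.
rewrite (big_ord_widen Q f (leq_maxl N n.+1)).
rewrite (big_ord_widen Q (fun j => ((j < N)%N)%:R * f j) (leq_maxr N n.+1)).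
rewrite big_mkcond [RHS]big_mkcond /=; apply: eq_bigr => j _.
case: (ltnP j N) => h1; case: (ltnP j n.+1) => h2 //=; rewrite ?mul1r ?mul0r //.
by rewrite f0.
Qed.

Lemma one_sub_cdf (m : int) n :
  1 - binocdf m n (1 / 2 : R) =
  \sum_(g < n.+1) 'C(n, g)%:R / (2 ^ n)%:R * (m < g%:Z)%R%:R.
Proof.
have e1 : 1 = \sum_(g < n.+1) 'C(n, g)%:R / (2 ^ n)%:R :> R.
  by rewrite -big_distrl /= sum_binom divff // pnatr_eq0 expn_eq0.
have e2 : binocdf m n (1 / 2 : R) =
   \sum_(g < n.+1) 'C(n, g)%:R / (2 ^ n)%:R * (g%:Z <= m)%R%:R.
  rewrite /binocdf; case: ifP => hm.
    rewrite big1 // => g _.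
    have -> : (g%:Z <= m)%R = false by apply/negbTE; rewrite -ltNge; lia.
    by rewrite mulr0.
  under eq_bigr do rewrite binopmf_half.
  rewrite (sum_trunc (f := fun j => 'C(n, j)%:R / (2 ^ n)%:R) (n := n)); last first.
    by move=> j h; rewrite bin_small // mul0r.
  apply: eq_bigr => g _; rewrite mulrC; congr (_ * _%:R).
  have hm' : (0 <= m)%R by move/negbT: hm; rewrite -leNgt.
  by rewrite -{2}(gez0_abs hm') lez_nat ltnS.
rewrite e2 {1}e1 -sumrB; apply: eq_bigr => g _.
rewrite -{1}(mulr1 ('C(n, g)%:R / (2 ^ n)%:R)) -mulrBr; congr (_ * _).
by case: (leP g%:Z m) => h; rewrite ?subrr ?subr0.
Qed.

End Bin.


Definition yof k (c : {ffun 'I_k -> bool}) : {ffun 'I_k -> xsym} := [ffun i => Some (c i)].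
Definition jx k (x : {ffun 'I_k -> xsym}) (c : {ffun 'I_k -> bool}) := #|[set i | x i != yof c i]|.

Lemma jx_lt k x c : (@jx k x c < k.+1)%N.
Proof. by rewrite ltnS /jx; have := max_card [set i | x i != yof c i]; rewrite card_ord. Qed.

Section Core.
Variable R : archiRealFieldType.
Variables (k M : nat) (hk : (0 < k)%N) (hM : (0 < M)%N) (ds dx : R).
Variables (s : {ffun 'I_k -> bool}) (E : {set 'I_k}).
Local Notation t := #|E|.
Local Notation fs := (Num.floor (k%:R * ds)).
Local Notation fx := (Num.floor (k%:R * dx)).

Definition xE : {ffun 'I_k -> xsym} := [ffun i => if i \in E then None else Some (s i)].

Lemma tk : (t <= k)%N.
Proof. by have := max_card E; rewrite card_ord. Qed.

Lemma jx_xE c : jx xE c = (t + bb s E c)%N.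
Proof.
rewrite /jx -(cardsID E [set i | xE i != yof c i]); congr (_ + _)%N; apply: eq_card => i;
  rewrite !inE !ffunE; case: (i \in E) => //=; rewrite ?andbF ?andbT //; by case: (s i); case: (c i).
Qed.

Lemma lt_dist (d : R) n : (d < n%:R / k%:R) = (Num.floor (k%:R * d) < n%:Z).
Proof.
by rewrite ltr_pdivlMr ?ltr0n // floor_lt_int mulrC -pmulrn.
Qed.

Definition indf (a g : nat) : R :=
  if (fs < (a + g)%:Z) || (fx < (t + g)%:Z) then 1 else 0.

Definition phi (c : {ffun 'I_k -> bool}) : R :=
  if (ds < dist_s R s c) || (dx < dist_x R xE (yof c)) then 1 else 0.

Lemma phi_ind c : phi c = indf (aa s E c) (bb s E c).
Proof.
rewrite /phi /indf /dist_s /dist_x.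
have -> : #|[set i | s i != c i]| = (aa s E c + bb s E c)%N by rewrite /aa /bb cardsID.
rewrite -/(jx xE c) jx_xE !lt_dist.
by [].
Qed.

Lemma JCb (F : nat -> R) :
  \sum_c F (bb s E c) = (2 ^ t)%:R * \sum_(g < (k - t).+1) 'C(k - t, g)%:R * F g.
Proof.
rewrite (JC s E (fun _ g => F g)) -sum_binom big_distrl; apply: eq_bigr => a _.
rewrite big_distrr; apply: eq_bigr => g _ /=; by rewrite natrM mulrA.
Qed.

Definition Hz (z : int) : R :=
  (2 ^ t)%:R * \sum_(g < (k - t).+1) 'C(k - t, g)%:R * (z <= (t + g)%:Z)%R%:R.

Lemma GG_Hz b : GG R (jx xE) b = Hz (b%:Z + 1).
Proof.
rewrite /GG; under eq_bigr do rewrite jx_xE.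
rewrite (JCb (fun g => ((b < t + g)%N)%:R)); congr (_ * _); apply: eq_bigr => g _.
congr (_ * _%:R); by apply/eqP; lia.
Qed.

Lemma HH_Hz b : HH R (jx xE) b = Hz b%:Z.
Proof.
rewrite /HH; under eq_bigr do rewrite jx_xE.
rewrite (JCb (fun g => ((b <= t + g)%N)%:R)) => //.
Qed.


Lemma HHmGG b : HH R (jx xE) b - GG R (jx xE) b =
  (2 ^ t)%:R * \sum_(g < (k - t).+1) 'C(k - t, g)%:R * ((t + g == b)%N)%:R.
Proof.
rewrite /HH /GG -sumrB; under eq_bigr do rewrite jx_xE.
rewrite (JCb (fun g => ((b <= t + g)%N)%:R - ((b < t + g)%N)%:R)); congr (_ * _).
apply: eq_bigr => g _; congr (_ * _).
rewrite leq_eqVlt eq_sym; case: eqP => [->|_] /=; by rewrite ?ltnn ?subr0 ?subrr.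
Qed.

Lemma pow2t_neq0 : (2 ^ t)%:R != 0 :> R.
Proof. by rewrite pnatr_eq0 expn_eq0. Qed.

Lemma N_eq b : \sum_c (jx xE c == b)%:R * phi c =
  (\sum_(a < t.+1) 'C(t, a)%:R / (2 ^ t)%:R * indf a (b - t)) *
    (HH R (jx xE) b - GG R (jx xE) b).
Proof.
under eq_bigr do rewrite jx_xE phi_ind.
rewrite (JC s E (fun a g => ((t + g == b)%N)%:R * indf a g)).
rewrite HHmGG big_distrl; apply: eq_bigr => a _ /=.
have h2 := pow2t_neq0.
rewrite [RHS](_ : _ = 'C(t, a)%:R * indf a (b - t) *
    \sum_(g < (k - t).+1) 'C(k - t, g)%:R * ((t + g == b)%N)%:R); last by field.
rewrite big_distrr; apply: eq_bigr => g _ /=.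
case: (eqVneq (t + g)%N b) => [<-|_] /=; last by rewrite mul0r !mulr0.
by rewrite addKn natrM; ring.
Qed.

Lemma Hz_le0 z : z <= 0 -> Hz z = Hz 0.
Proof.
move=> hz; rewrite /Hz; congr (_ * _); apply: eq_bigr => g _.
have -> : (z <= (t + g)%:Z)%R by lia.
have -> : (0 <= (t + g)%:Z)%R by lia.
by [].
Qed.

Lemma Hz_big z : (k%:Z < z) -> Hz z = 0.
Proof.
move=> hz; rewrite /Hz big1 ?mulr0 // => g _.
have hg := ltn_ord g; have ht := tk.
have -> : (z <= (t + g)%:Z)%R = false by apply/negbTE; rewrite -ltNge; lia.
by rewrite mulr0.
Qed.

Lemma tele_part a :
  \sum_(b < k.+1) indf a (b - t) * (Hz b%:Z ^+ M - Hz (b%:Z + 1) ^+ M) =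
  Hz (t%:Z + Num.min (fs - a%:Z) (fx - t%:Z) + 1) ^+ M.
Proof.
set L := t%:Z + Num.min (fs - a%:Z) (fx - t%:Z).
transitivity (\sum_(b < k.+1)
   (if L < b%:Z then Hz b%:Z ^+ M - Hz (b%:Z + 1) ^+ M else 0)).
  apply: eq_bigr => b _; case: (leqP t b) => htb.
    rewrite /indf; case: ifP => h1; case: ifP => h2; rewrite ?mul1r ?mul0r //; exfalso.
      move: h1 h2; rewrite /L; lia.
    move: h1 h2; rewrite /L; lia.
  have -> : Hz b%:Z = Hz (b%:Z + 1).
    rewrite /Hz; congr (_ * _); apply: eq_bigr => g _.
    have -> : (b%:Z <= (t + g)%:Z)%R by lia.
    have -> : (b%:Z + 1 <= (t + g)%:Z)%R by lia.
    by [].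
  by rewrite subrr mulr0; case: ifP.
have := @tele_int R (fun z => Hz z ^+ M) L k.+1 (fun z hz => congr1 (fun x => x ^+ M) (Hz_le0 hz)).
rewrite /= => ->.
have e0 : (0 : R) ^+ M = 0 by rewrite expr0n; case: M hM.
case: ifP => h.
  by rewrite [Hz k.+1%:Z]Hz_big ?e0 ?subr0 //; lia.
by rewrite Hz_big ?e0 //; move/negbT: h; rewrite -leNgt; lia.
Qed.

Lemma Hz_cdf m : Hz (t%:Z + m + 1) = (2 ^ k)%:R * (1 - binocdf m (k - t) (1 / 2)).
Proof.
rewrite one_sub_cdf /Hz big_distrr [RHS]big_distrr /=; apply: eq_bigr => g _.
have -> : (t%:Z + m + 1 <= (t + g)%:Z)%R = (m < g%:Z)%R.
  case: (ltP m g%:Z) => h; [apply/idP|apply/negbTE; rewrite -ltNge]; lia.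
have e : (2 ^ k)%:R = (2 ^ t)%:R * (2 ^ (k - t))%:R :> R.
  by rewrite -natrM -expnD subnKC // tk.
have h2 : (2 ^ (k - t))%:R != 0 :> R by rewrite pnatr_eq0 expn_eq0.
by rewrite e; field.
Qed.

Lemma core :
  \sum_(C : {ffun 'I_M -> {ffun 'I_k -> bool}}) phi (C (um hM (jx xE) C)) =
  ((2 ^ k) ^ M)%:R * \sum_(i < t.+1) binopmf i t (1 / 2 : R) *
     (1 - binocdf (Num.min (fs - i%:Z) (fx - t%:Z)) (k - t) (1 / 2)) ^+ M.
Proof.
rewrite (argmin_sum hM (@jx_lt k xE) phi).
under eq_bigr => b _ do rewrite N_eq.
transitivity (\sum_(b < k.+1)
   (\sum_(a < t.+1) 'C(t, a)%:R / (2 ^ t)%:R * indf a (b - t)) *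
   (HH R (jx xE) b ^+ M - GG R (jx xE) b ^+ M)).
  apply: eq_bigr => b _; rewrite -mulrA; congr (_ * _).
  rewrite subrXX; congr (_ * _); apply: eq_bigr => i _; by rewrite mulrC.
under eq_bigr do rewrite big_distrl /=.
rewrite exchange_big /= big_distrr; apply: eq_bigr => a _ /=.
under eq_bigr do rewrite -mulrA.
rewrite -big_distrr /=.
under eq_bigr do rewrite HH_Hz GG_Hz.
rewrite tele_part Hz_cdf binopmf_half exprMn -natrX mulrCA.
have h2 := pow2t_neq0.
by [].
Qed.

End Core.


Section Final.
Variable R : archiRealFieldType.
Variables (k M : nat) (hM : (0 < M)%N) (delta ds dx : R).

Definition encC (C : {ffun 'I_M -> {ffun 'I_k -> bool}}) (x : {ffun 'I_k -> xsym}) (u : 'I_M) : R :=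
  (u == um hM (@jx k x) C)%:R.
Definition decC (C : {ffun 'I_M -> {ffun 'I_k -> bool}}) (u : 'I_M)
   (zy : {ffun 'I_k -> bool} * {ffun 'I_k -> xsym}) : R :=
  (zy == (C u, yof (C u)))%:R.

Definition phig (s : {ffun 'I_k -> bool}) (x : {ffun 'I_k -> xsym}) (c : {ffun 'I_k -> bool}) : R :=
  if (ds < dist_s R s c) || (dx < dist_x R x (yof c)) then 1 else 0.

Lemma encC_ok C : is_encoder (encC C).
Proof.
move=> x; split => [u|]; first exact: ler0n.
rewrite (bigD1 (um hM (@jx k x) C)) //= /encC eqxx big1 ?addr0 // => u nu.
by rewrite (negbTE nu).
Qed.

Lemma decC_ok C : is_decoder (decC C).
Proof.
move=> u; split => [zy|]; first exact: ler0n.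
rewrite (bigD1 (C u, yof (C u))) //= /decC eqxx big1 ?addr0 // => zy nzy.
by rewrite (negbTE nzy).
Qed.

Lemma excess_eq C : excess_prob delta ds dx (encC C) (decC C) =
  \sum_s \sum_x efcf_pmf delta s x * phig s x (C (um hM (@jx k x) C)).
Proof.
rewrite /excess_prob; apply: eq_bigr => s _; apply: eq_bigr => x _.
rewrite (bigD1 (um hM (@jx k x) C)) //= [X in _ + X]big1 ?addr0; last first.
  move=> u nu; apply: big1 => zy _; by rewrite /encC (negbTE nu) mulr0 !mul0r.
set u := um hM (@jx k x) C.
rewrite (bigD1 (C u, yof (C u))) //= [X in _ + X]big1 ?addr0; last first.
  move=> zy nzy; by rewrite /decC (negbTE nzy) mulr0 mul0r.
by rewrite /encC /decC !eqxx !mulr1.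
Qed.

Lemma sum_x_E s (Q : {ffun 'I_k -> xsym} -> R) :
  \sum_x efcf_pmf delta s x * Q x =
  \sum_(E : {set 'I_k}) efcf_pmf delta s (xE s E) * Q (xE s E).
Proof.
pose cons (x : {ffun 'I_k -> xsym}) := [forall i, (x i == None) || (x i == Some (s i))].
rewrite (bigID cons) /= [X in _ + X]big1 ?addr0; last first.
  move=> x /forallPn [i]; rewrite negb_or => /andP [h1 h2].
  rewrite /efcf_pmf (bigD1 i) //= /efcf_pmf1.
  move: h1 h2; case: (x i) => [b|] //= _ hb.
  have -> : (b == s i) = false by apply/negbTE; apply: contra hb => /eqP ->.
  by rewrite mulr0 !mul0r.
rewrite (reindex (fun E => xE s E)) /=; last first.
  exists (fun x => [set i | x i == None]) => [E _ | x].
    by apply/setP => i; rewrite inE ffunE; case: (i \in E).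
  rewrite inE => /forallP hx; apply/ffunP => i; rewrite ffunE inE.
  move: (hx i); case: (x i) => [b|] //= /eqP [->] //.
apply: eq_bigl => E; apply/forallP => i; rewrite ffunE; case: (i \in E) => //=; by rewrite eqxx orbT.
Qed.

Lemma pmf_xE (s : {ffun 'I_k -> bool}) (E : {set 'I_k}) : efcf_pmf delta s (xE s E) =
  (1 / 2) ^+ k * (delta ^+ #|E| * (1 - delta) ^+ (k - #|E|)).
Proof.
rewrite /efcf_pmf big_split /= prodr_const card_ord; congr (_ * _).
rewrite (bigID (mem E)) /=; congr (_ * _).
  rewrite (eq_bigr (fun=> delta)); last by move=> i hi; rewrite ffunE hi.
  by rewrite prodr_const.
rewrite (eq_bigl (mem (~: E))); last by move=> i; rewrite !inE.
rewrite (eq_bigr (fun=> 1 - delta)); last first.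
  move=> i hi; rewrite ffunE; move: hi; rewrite !inE => /negbTE -> /=; by rewrite eqxx.
by rewrite prodr_const cardCE.
Qed.

Lemma group_card (f : nat -> R) :
  \sum_(E : {set 'I_k}) f #|E| = \sum_(t < k.+1) 'C(k, t)%:R * f t.
Proof.
rewrite (@sum_by_val _ _ xpredT (fun E : {set 'I_k} => #|E|) k.+1 f); last first.
  by move=> E _; rewrite ltnS; have := max_card E; rewrite card_ord.
apply: eq_bigr => t _; congr (_%:R * _).
have := card_draws 'I_k t; rewrite card_ord => <-.
by apply: eq_card => E; rewrite !inE.
Qed.

End Final.


Unset Implicit Arguments.

Definition Phi (R : archiRealFieldType) (k M : nat) (ds dx : R) (t : nat) : R :=
  \sum_(i < t.+1) binopmf i t (1 / 2) *
         (1 - binocdf (Num.min (Num.floor (k%:R * ds) - i%:Z)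
                               (Num.floor (k%:R * dx) - t%:Z)) (k - t) (1 / 2)) ^+ M.

Lemma core' (R : archiRealFieldType) (k M : nat) (hk : (0 < k)%N) (hM : (0 < M)%N) (ds dx : R) s E :
  \sum_(C : {ffun 'I_M -> {ffun 'I_k -> bool}}) phig ds dx s (xE s E) (C (um hM (@jx k (xE s E)) C)) =
  ((2 ^ k) ^ M)%:R * Phi R k M ds dx #|E|.
Proof. exact: (core hk hM ds dx s E). Qed.

Theorem theorem7 (R : archiRealFieldType) (delta ds dx : R)
  (hdelta0 : 0 <= delta) (hdelta1 : delta <= 1)
  (hreg : region_D2 delta ds dx \/ region_D3 delta ds dx)
  (k M : nat) (hk : (0 < k)%N) (hM : (0 < M)%N) :
  is_code k M delta ds dx
    (\sum_(t < k.+1) binopmf t k delta *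
       \sum_(i < t.+1) binopmf i t (1 / 2) *
         (1 - binocdf (Num.min (Num.floor (k%:R * ds) - i%:Z)
                               (Num.floor (k%:R * dx) - t%:Z)) (k - t) (1 / 2)) ^+ M).
Proof.
set bnd := (X in is_code _ _ _ _ _ X).
have ebnd : bnd = \sum_(t < k.+1) binopmf t k delta * Phi R k M ds dx t by [].
pose CB := {ffun 'I_M -> {ffun 'I_k -> bool}}.
have Hsum : \sum_(C : CB) excess_prob delta ds dx (encC R hM C) (decC R C) = #|CB|%:R * bnd.
  under eq_bigr do rewrite excess_eq.
  rewrite exchange_big /=; under eq_bigr do rewrite exchange_big /=.
  under eq_bigr do under eq_bigr do rewrite -big_distrr /=.
  under eq_bigr do rewrite sum_x_E.
  under eq_bigr do under eq_bigr do rewrite pmf_xE (@core' R k M hk hM ds dx).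
  under eq_bigr do rewrite (group_card k (fun t => (1 / 2) ^+ k * (delta ^+ t * (1 - delta) ^+ (k - t)) * (((2 ^ k) ^ M)%:R * Phi R k M ds dx t))).
  rewrite sumr_const ebnd.
  have cT : #|{ffun 'I_k -> bool}| = (2 ^ k)%N by rewrite card_ffun card_bool card_ord.
  have -> : #|(xpredT : pred {ffun 'I_k -> bool})| = (2 ^ k)%N by rewrite -cT; apply: eq_card.
  have -> : #|CB| = ((2 ^ k) ^ M)%N by rewrite card_ffun cT card_ord.
  have h2 : (1 / 2 : R) ^+ k * (2 ^ k)%:R = 1.
    by rewrite natrX -exprMn mul1r mulVf ?expr1n // pnatr_eq0.
  rewrite -[X in X = _]mulr_natr big_distrl big_distrr /=; apply: eq_bigr => t _.
  rewrite /binopmf.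
  transitivity ('C(k, t)%:R * (delta ^+ t * (1 - delta) ^+ (k - t)) * Phi R k M ds dx t *
     ((2 ^ k) ^ M)%:R * ((1 / 2 : R) ^+ k * (2 ^ k)%:R)); first ring.
  rewrite h2; ring.
have [C0 _] : exists C : CB, True by exists [ffun=> [ffun=> false]].
case: (boolP [exists C : CB, excess_prob delta ds dx (encC R hM C) (decC R C) <= bnd]) =>
  [/existsP [C hC]|/existsPn H].
  by exists (encC R hM C), (decC R C); split => //; [exact: encC_ok | exact: decC_ok].
exfalso.
have : \sum_(C : CB) bnd < \sum_(C : CB) excess_prob delta ds dx (encC R hM C) (decC R C).
  apply: ltr_sum; first by apply/hasP; exists C0; rewrite ?mem_index_enum.
  by move=> C _; rewrite ltNge H.
rewrite Hsum sumr_const mulr_natl (_ : #|xpredT| = #|CB|) ?ltxx //; exact: eq_card.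
Qed.
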